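(* Consider the interior permanent magnet synchronous machine with state $x=(i_{s\alpha},i_{s\beta},\omega,\theta)^T$, input $v=(v_{s\alpha},v_{s\beta})^T$, output $y=(i_{s\alpha},i_{s\beta})^T$, given by $$\frac{d}{dt}\Big(L(\theta)\,i_{s\alpha\beta}+\psi_r\begin{bmatrix}\cos\theta\\ \sin\theta\end{bmatrix}\Big)=v-R_s\,i_{s\alpha\beta},\qquad\dot\omega=0,\qquad\dot\theta=\omega,$$ with $L(\theta)=\begin{bmatrix}L_0+L_2\cos2\theta & L_2\sin2\theta\\ L_2\sin2\theta & L_0-L_2\cos2\theta\end{bmatrix}$, $L_d=L_0+L_2>0$, $L_q=L_0-L_2>0$, $L_\Delta=L_d-L_q$, and constants $R_s$, $\psi_r$. Let $\mathcal{O}(x)$ be the $4\times4$ matrix whose rows are the gradients with respect to $x$ of $i_{s\alpha}$, $i_{s\beta}$, $\mathcal{L}_fi_{s\alpha}$, $\mathcal{L}_fi_{s\beta}$. With $i_{sd},i_{sq}$ defined by $\begin{bmatrix}i_{s\alpha}\\ i_{s\beta}\end{bmatrix}=\begin{bmatrix}\cos\theta&-\sin\theta\\ \sin\theta&\cos\theta\end{bmatrix}\begin{bmatrix}i_{sd}\\ i_{sq}\end{bmatrix}$ and $\frac{di_{sd}}{dt},\frac{di_{sq}}{dt}$ their time derivatives along the model, one has $$\det\mathcal{O}(x)=\frac{1}{L_dL_q}\Big[(L_\Delta i_{sd}+\psi_r)^2+L_\Delta^2i_{sq}^2\Big]\omega+\frac{L_\Delta}{L_dL_q}\Big[L_\Delta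 i_{sq}\frac{di_{sd}}{dt}-(L_\Delta i_{sd}+\psi_r)\frac{di_{sq}}{dt}\Big].$$ In particular, for the surface PMSM ($L_2=0$, $L_d=L_q=L_0$): $\det\mathcal{O}=\frac{\psi_r^2}{L_0^2}\omega$; and for the synchronous reluctance machine ($\psi_r=0$): $\det\mathcal{O}=\frac{L_\Delta^2}{L_dL_q}\big[(i_{sd}^2+i_{sq}^2)\omega+\frac{di_{sd}}{dt}i_{sq}-i_{sd}\frac{di_{sq}}{dt}\big]$.
   Context: The Lie derivative $\mathcal{L}_fh$ of an output component $h$ along $\dot x=f(x,u)$ is $\frac{\partial h}{\partial x}f(x,u)$; here $f$ is obtained by solving the flux equation for $\frac{d}{dt}i_{s\alpha\beta}$. *)

(* Defs.v *)
From Stdlib Require Import Reals.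
Open Scope R_scope.

Definition L11 (L0 L2 th : R) : R := L0 + L2 * cos (2 * th).
Definition L12 (L0 L2 th : R) : R := L2 * sin (2 * th).
Definition L22 (L0 L2 th : R) : R := L0 - L2 * cos (2 * th).

Definition dL11 (L2 th : R) : R := - 2 * L2 * sin (2 * th).
Definition dL12 (L2 th : R) : R := 2 * L2 * cos (2 * th).
Definition dL22 (L2 th : R) : R := 2 * L2 * sin (2 * th).

(* Expanding the flux equation with dth/dt = w:
     L(th) di/dt + w (dL/dth) i + psi w (-sin th, cos th) = v - Rs i,
   i.e.  L(th) di/dt = rhs  with rhs below. *)
Definition rhs1 (L0 L2 Rs psi ia ib w th va : R) : R :=
  va - Rs * ia - w * (dL11 L2 th * ia + dL12 L2 th * ib) - psi * w * (- sin th).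
Definition rhs2 (L0 L2 Rs psi ia ib w th vb : R) : R :=
  vb - Rs * ib - w * (dL12 L2 th * ia + dL22 L2 th * ib) - psi * w * cos th.

Definition detL (L0 L2 th : R) : R :=
  L11 L0 L2 th * L22 L0 L2 th - L12 L0 L2 th * L12 L0 L2 th.

(* Solving the flux equation for d i_{s alpha beta}/dt: the current components
   of the vector field f(x, v)  (f = (f1, f2, 0, w)). *)
Definition f1 (L0 L2 Rs psi va vb ia ib w th : R) : R :=
  (L22 L0 L2 th * rhs1 L0 L2 Rs psi ia ib w th va
   - L12 L0 L2 th * rhs2 L0 L2 Rs psi ia ib w th vb) / detL L0 L2 th.
Definition f2 (L0 L2 Rs psi va vb ia ib w th : R) : R :=
  (- L12 L0 L2 th * rhs1 L0 L2 Rs psi ia ib w th va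
   + L11 L0 L2 th * rhs2 L0 L2 Rs psi ia ib w th vb) / detL L0 L2 th.

(* Lie derivatives of the outputs along f: L_f ia = grad(ia).f = f1, L_f ib = f2. *)
Definition Lf_ia (L0 L2 Rs psi va vb : R) : R -> R -> R -> R -> R :=
  f1 L0 L2 Rs psi va vb.
Definition Lf_ib (L0 L2 Rs psi va vb : R) : R -> R -> R -> R -> R :=
  f2 L0 L2 Rs psi va vb.

Definition is_grad (g : R -> R -> R -> R -> R) (a b c d : R) (d1 d2 d3 d4 : R) : Prop :=
  derivable_pt_lim (fun z => g z b c d) a d1 /\
  derivable_pt_lim (fun z => g a z c d) b d2 /\
  derivable_pt_lim (fun z => g a b z d) c d3 /\
  derivable_pt_lim (fun z => g a b c z) d d4.

Definition det3 (a b c d e f g h i : R) : R :=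
  a * (e * i - f * h) - b * (d * i - f * g) + c * (d * h - e * g).

Definition det4 (M : nat -> nat -> R) : R :=
    M 0%nat 0%nat * det3 (M 1%nat 1%nat) (M 1%nat 2%nat) (M 1%nat 3%nat)
                         (M 2%nat 1%nat) (M 2%nat 2%nat) (M 2%nat 3%nat)
                         (M 3%nat 1%nat) (M 3%nat 2%nat) (M 3%nat 3%nat)
  - M 0%nat 1%nat * det3 (M 1%nat 0%nat) (M 1%nat 2%nat) (M 1%nat 3%nat)
                         (M 2%nat 0%nat) (M 2%nat 2%nat) (M 2%nat 3%nat)
                         (M 3%nat 0%nat) (M 3%nat 2%nat) (M 3%nat 3%nat)
  + M 0%nat 2%nat * det3 (M 1%nat 0%nat) (M 1%nat 1%nat) (M 1%nat 3%nat)
                         (M 2%nat 0%nat) (M 2%nat 1%nat) (M 2%nat 3%nat)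
                         (M 3%nat 0%nat) (M 3%nat 1%nat) (M 3%nat 3%nat)
  - M 0%nat 3%nat * det3 (M 1%nat 0%nat) (M 1%nat 1%nat) (M 1%nat 2%nat)
                         (M 2%nat 0%nat) (M 2%nat 1%nat) (M 2%nat 2%nat)
                         (M 3%nat 0%nat) (M 3%nat 1%nat) (M 3%nat 2%nat).

Definition detO_is (L0 L2 Rs psi va vb ia ib w th D : R) : Prop :=
  exists M : nat -> nat -> R,
    is_grad (fun a _ _ _ => a) ia ib w th (M 0%nat 0%nat) (M 0%nat 1%nat) (M 0%nat 2%nat) (M 0%nat 3%nat) /\
    is_grad (fun _ b _ _ => b) ia ib w th (M 1%nat 0%nat) (M 1%nat 1%nat) (M 1%nat 2%nat) (M 1%nat 3%nat) /\
    is_grad (Lf_ia L0 L2 Rs psi va vb) ia ib w th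
            (M 2%nat 0%nat) (M 2%nat 1%nat) (M 2%nat 2%nat) (M 2%nat 3%nat) /\
    is_grad (Lf_ib L0 L2 Rs psi va vb) ia ib w th
            (M 3%nat 0%nat) (M 3%nat 1%nat) (M 3%nat 2%nat) (M 3%nat 3%nat) /\
    det4 M = D.

(* Rotor-frame currents: i_ab = Rot(th) i_dq, so i_dq = Rot(-th) i_ab. *)
Definition isd (ia ib th : R) : R := cos th * ia + sin th * ib.
Definition isq (ia ib th : R) : R := - sin th * ia + cos th * ib.

(* Time derivatives of isd, isq along the model (chain rule with
   dth/dt = w, d ia/dt = f1, d ib/dt = f2). *)
Definition disd (L0 L2 Rs psi va vb ia ib w th : R) : R :=
  w * (- sin th * ia + cos th * ib)
  + cos th * f1 L0 L2 Rs psi va vb ia ib w th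
  + sin th * f2 L0 L2 Rs psi va vb ia ib w th.
Definition disq (L0 L2 Rs psi va vb ia ib w th : R) : R :=
  w * (- cos th * ia - sin th * ib)
  - sin th * f1 L0 L2 Rs psi va vb ia ib w th
  + cos th * f2 L0 L2 Rs psi va vb ia ib w th.

(* Main.v *)
Require Import Defs.
From Stdlib Require Import Reals Lra.
From Coquelicot Require Import Coquelicot.
Open Scope R_scope.
Section S.
Variables L0 L2 Rs psi va vb ia ib w : R.
Definition K := L0*L0-L2*L2.
Definition Aa c s := L0 - L2*(c*c-s*s).
Definition Ab c s := L0 + L2*(c*c-s*s).
Definition Bb c s := L2*(2*s*c).
Definition R1 ia ib w c s := va - Rs*ia - w*(-2*L2*(2*s*c)*ia + 2*L2*(c*c-s*s)*ib) + psi*w*s.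
Definition R2 ia ib w c s := vb - Rs*ib - w*(2*L2*(c*c-s*s)*ia + 2*L2*(2*s*c)*ib) - psi*w*c.
Definition G1 ia ib w c s := (Aa c s * R1 ia ib w c s - Bb c s * R2 ia ib w c s) / K.
Definition G2 ia ib w c s := (- Bb c s * R1 ia ib w c s + Ab c s * R2 ia ib w c s) / K.
Definition R1w c s := -(-4*L2*s*c*ia + 2*L2*(c*c-s*s)*ib) + psi*s.
Definition R2w c s := -(2*L2*(c*c-s*s)*ia + 4*L2*s*c*ib) - psi*c.
Definition G1w c s := (Aa c s * R1w c s - Bb c s * R2w c s) / K.
Definition G2w c s := (- Bb c s * R1w c s + Ab c s * R2w c s) / K.
Definition R1t c s := -w*(-4*L2*(c*c-s*s)*ia - 8*L2*s*c*ib) + psi*w*c.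
Definition R2t c s := -w*(-8*L2*s*c*ia + 4*L2*(c*c-s*s)*ib) + psi*w*s.
Definition G1t c s := (4*L2*s*c * R1 ia ib w c s + Aa c s * R1t c s
   - 2*L2*(c*c-s*s) * R2 ia ib w c s - Bb c s * R2t c s) / K.
Definition G2t c s := (- 2*L2*(c*c-s*s) * R1 ia ib w c s - Bb c s * R1t c s
   - 4*L2*s*c * R2 ia ib w c s + Ab c s * R2t c s) / K.
End S.


Lemma f1_G1 L0 L2 Rs psi va vb ia ib w th : K L0 L2 <> 0 ->
  f1 L0 L2 Rs psi va vb ia ib w th = G1 L0 L2 Rs psi va vb ia ib w (cos th) (sin th).
Proof.
intros HK.
assert (HD : detL L0 L2 th = K L0 L2).
{ unfold detL, L11, L12, L22, K. pose proof (sin2_cos2 (2*th)). unfold Rsqr in H. nra. }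
unfold f1. rewrite HD. unfold G1, Aa, Bb, R1, R2, rhs1, rhs2, L11, L12, L22, dL11, dL12, dL22.
rewrite sin_2a, cos_2a. field. auto.
Qed.

Lemma f2_G2 L0 L2 Rs psi va vb ia ib w th : K L0 L2 <> 0 ->
  f2 L0 L2 Rs psi va vb ia ib w th = G2 L0 L2 Rs psi va vb ia ib w (cos th) (sin th).
Proof.
intros HK.
assert (HD : detL L0 L2 th = K L0 L2).
{ unfold detL, L11, L12, L22, K. pose proof (sin2_cos2 (2*th)). unfold Rsqr in H. nra. }
unfold f2. rewrite HD. unfold G2, Ab, Bb, R1, R2, rhs1, rhs2, L11, L12, L22, dL11, dL12, dL22.
rewrite sin_2a, cos_2a. field. auto.
Qed.

Lemma d1t L0 L2 Rs psi va vb ia ib w th : K L0 L2 <> 0 ->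
  derivable_pt_lim (fun z => f1 L0 L2 Rs psi va vb ia ib z th) w (G1w L0 L2 psi ia ib (cos th) (sin th)) /\
  derivable_pt_lim (fun z => f1 L0 L2 Rs psi va vb ia ib w z) th (G1t L0 L2 Rs psi va vb ia ib w (cos th) (sin th)) /\
  derivable_pt_lim (fun z => f2 L0 L2 Rs psi va vb ia ib z th) w (G2w L0 L2 psi ia ib (cos th) (sin th)) /\
  derivable_pt_lim (fun z => f2 L0 L2 Rs psi va vb ia ib w z) th (G2t L0 L2 Rs psi va vb ia ib w (cos th) (sin th)).
Proof.
intros HK. repeat split; apply is_derive_Reals.
- apply (is_derive_ext (fun z => G1 L0 L2 Rs psi va vb ia ib z (cos th) (sin th))).
  { intros; symmetry; apply f1_G1; auto. }
  unfold G1, G1w, Aa, Bb, R1, R2, R1w, R2w. auto_derive. auto. field. auto.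
- apply (is_derive_ext (fun z => G1 L0 L2 Rs psi va vb ia ib w (cos z) (sin z))).
  { intros; symmetry; apply f1_G1; auto. }
  unfold G1, G1t, Aa, Bb, R1, R2, R1t, R2t. auto_derive. auto. field. auto.
- apply (is_derive_ext (fun z => G2 L0 L2 Rs psi va vb ia ib z (cos th) (sin th))).
  { intros; symmetry; apply f2_G2; auto. }
  unfold G2, G2w, Ab, Bb, R1, R2, R1w, R2w. auto_derive. auto. field. auto.
- apply (is_derive_ext (fun z => G2 L0 L2 Rs psi va vb ia ib w (cos z) (sin z))).
  { intros; symmetry; apply f2_G2; auto. }
  unfold G2, G2t, Ab, Bb, R1, R2, R1t, R2t. auto_derive. auto. field. auto.
Qed.

Lemma dab L0 L2 Rs psi va vb ia ib w th : K L0 L2 <> 0 ->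
  derivable_pt_lim (fun z => f1 L0 L2 Rs psi va vb z ib w th) ia (Derive (fun z => f1 L0 L2 Rs psi va vb z ib w th) ia) /\
  derivable_pt_lim (fun z => f1 L0 L2 Rs psi va vb ia z w th) ib (Derive (fun z => f1 L0 L2 Rs psi va vb ia z w th) ib) /\
  derivable_pt_lim (fun z => f2 L0 L2 Rs psi va vb z ib w th) ia (Derive (fun z => f2 L0 L2 Rs psi va vb z ib w th) ia) /\
  derivable_pt_lim (fun z => f2 L0 L2 Rs psi va vb ia z w th) ib (Derive (fun z => f2 L0 L2 Rs psi va vb ia z w th) ib).
Proof.
intros HK. repeat split; apply is_derive_Reals; apply Derive_correct.
- apply (ex_derive_ext (fun z => G1 L0 L2 Rs psi va vb z ib w (cos th) (sin th))).
  { intros; symmetry; apply f1_G1; auto. }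
  unfold G1, Aa, Bb, R1, R2. auto_derive. auto.
- apply (ex_derive_ext (fun z => G1 L0 L2 Rs psi va vb ia z w (cos th) (sin th))).
  { intros; symmetry; apply f1_G1; auto. }
  unfold G1, Aa, Bb, R1, R2. auto_derive. auto.
- apply (ex_derive_ext (fun z => G2 L0 L2 Rs psi va vb z ib w (cos th) (sin th))).
  { intros; symmetry; apply f2_G2; auto. }
  unfold G2, Ab, Bb, R1, R2. auto_derive. auto.
- apply (ex_derive_ext (fun z => G2 L0 L2 Rs psi va vb ia z w (cos th) (sin th))).
  { intros; symmetry; apply f2_G2; auto. }
  unfold G2, Ab, Bb, R1, R2. auto_derive. auto.
Qed.

Lemma alg L0 L2 Rs psi va vb ia ib w c s : c*c+s*s = 1 -> (L0+L2)*(L0-L2) <> 0 ->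
  let Ld := L0 + L2 in let Lq := L0 - L2 in let LD := Ld - Lq in
  let id := c*ia + s*ib in let iq := -s*ia + c*ib in
  let F1 := G1 L0 L2 Rs psi va vb ia ib w c s in
  let F2 := G2 L0 L2 Rs psi va vb ia ib w c s in
  let did := w*(-s*ia + c*ib) + c*F1 + s*F2 in
  let diq := w*(-c*ia - s*ib) - s*F1 + c*F2 in
  G1w L0 L2 psi ia ib c s * G2t L0 L2 Rs psi va vb ia ib w c s
  - G1t L0 L2 Rs psi va vb ia ib w c s * G2w L0 L2 psi ia ib c s =
  1 / (Ld * Lq) * ((LD * id + psi) ^ 2 + LD ^ 2 * iq ^ 2) * w
        + LD / (Ld * Lq) * (LD * iq * did - (LD * id + psi) * diq).
Proof.
intros Hcs HK. intros.
subst Ld Lq LD id iq F1 F2 did diq.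
unfold G1, G2, G1w, G2w, G1t, G2t, K.
set (Aa0 := Aa L0 L2 c s). set (Ab0 := Ab L0 L2 c s). set (Bb0 := Bb L2 c s).
set (R10 := R1 L2 Rs psi va ia ib w c s). set (R20 := R2 L2 Rs psi vb ia ib w c s).
set (R1w0 := R1w L2 psi ia ib c s). set (R2w0 := R2w L2 psi ia ib c s).
set (R1t0 := R1t L2 psi ia ib w c s). set (R2t0 := R2t L2 psi ia ib w c s).
set (N1 := Aa0*R10 - Bb0*R20). set (N2 := - Bb0*R10 + Ab0*R20).
set (N1w := Aa0*R1w0 - Bb0*R2w0). set (N2w := - Bb0*R1w0 + Ab0*R2w0).
set (N1t := 4*L2*s*c * R10 + Aa0 * R1t0 - 2*L2*(c*c-s*s) * R20 - Bb0 * R2t0).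
set (N2t := - 2*L2*(c*c-s*s) * R10 - Bb0 * R1t0 - 4*L2*s*c * R20 + Ab0 * R2t0).
set (KK := L0*L0-L2*L2).
assert (HKK : KK <> 0) by (unfold KK; contradict HK; lra).
assert (E: (L0+L2)*(L0-L2) = KK) by (unfold KK; ring). rewrite E.
set (LD := L0 + L2 - (L0 - L2)). set (idd := c*ia + s*ib). set (iq := -s*ia + c*ib).
set (didN := KK*w*iq + c*N1 + s*N2). set (diqN := KK*w*(-c*ia-s*ib) - s*N1 + c*N2).
assert (HP : N1w*N2t - N1t*N2w =
   KK*((LD*idd+psi)^2+LD^2*iq^2)*w + LD*(LD*iq*didN-(LD*idd+psi)*diqN)).
{ apply Rminus_diag_uniq.
  transitivity (((2)*L2*L2*L2*psi*ia*w*c*c*c*c*c + (-4)*L2*L2*L2*va*ib*c*c*c*c + (8)*L2*L2*L2*Rs*ia*ib*c*c*c*c + (-8)*L0*L2*L2*L2*ib*ib*w*c*c*c*c + (2)*L2*L2*L2*psi*ib*w*c*c*c*c*s + (8)*L0*L2*L2*L2*ia*ia*w*c*c*c*c + (1)*L2*L2*psi*psi*w*c*c*c*c + (-4)*L2*L2*L2*vb*ia*c*c*c*c + (-8)*L2*L2*L2*L2*ib*ib*w*c*c*c*c + (-8)*L2*L2*L2*L2*ia*ia*w*c*c*c*c + (-8)*L2*L2*L2*vb*ib*c*c*c*s + (8)*L2*L2*L2*Rs*ib*ib*c*c*c*s + (32)*L0*L2*L2*L2*ia*ib*w*c*c*c*s + (8)*L2*L2*L2*va*ia*c*c*c*s +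 (-8)*L2*L2*L2*Rs*ia*ia*c*c*c*s + (4)*L2*L2*L2*psi*ia*w*c*c*c*s*s + (8)*L0*L2*L2*psi*ia*w*c*c*c + (-2)*L2*L2*psi*vb*c*c*c + (2)*L2*L2*Rs*psi*ib*c*c*c + (-6)*L2*L2*L2*psi*ia*w*c*c*c + (4)*L0*L2*L2*va*ib*c*c + (8)*L0*L0*L2*L2*ib*ib*w*c*c + (8)*L0*L2*L2*psi*ib*w*c*c*s + (4)*L2*L2*L2*psi*ib*w*c*c*s*s*s + (2)*L2*L2*psi*va*c*c*s + (-2)*L2*L2*Rs*psi*ia*c*c*s + (2)*L2*L2*psi*psi*w*c*c*s*s + (8)*L0*L0*L2*L2*ia*ia*w*c*c + (2)*L0*L2*psi*psi*w*c*c + (-4)*L0*L2*L2*vb*ia*c*c + (-16)*L2*L2*L2*L2*ia*ia*w*c*c*s*s + (-16)*L2*L2*L2*L2*ib*ib*w*c*c*s*s + (-6)*L2*L2*L2*psi*ib*w*c*c*s + (-1)*L2*L2*psi*psi*w*c*c + (-8)*L2*L2*L2*L2*ib*ib*w*c*c + (-8)*L2*L2*L2*L2*ia*ia*w*c*c + (8)*L0*L2*L2*psi*ia*w*c*s*s + (-8)*L2*L2*L2*vb*ib*c*s*s*s + (8)*L2*L2*L2*Rs*ib*ib*c*s*s*s + (32)*L0*L2*L2*L2*ia*ib*w*c*s*s*s + (-2)*L2*L2*psi*vb*c*s*s + (2)*L2*L2*Rs*psi*ib*c*s*s + (8)*L2*L2*L2*va*ia*c*s*s*s + (-8)*L2*L2*L2*Rs*ia*ia*c*s*s*s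 + (2)*L2*L2*L2*psi*ia*w*c*s*s*s*s + (6)*L0*L0*L2*psi*ia*w*c + (-2)*L0*L2*psi*vb*c + (2)*L0*L2*Rs*psi*ib*c + (-6)*L2*L2*L2*psi*ia*w*c*s*s + (-6)*L2*L2*L2*psi*ia*w*c + (-4)*L0*L2*L2*vb*ia*s*s + (8)*L0*L0*L2*L2*ia*ia*w*s*s + (4)*L0*L2*L2*va*ib*s*s + (8)*L0*L2*L2*psi*ib*w*s*s*s + (8)*L0*L0*L2*L2*ib*ib*w*s*s + (6)*L0*L0*L2*psi*ib*w*s + (2)*L0*L2*psi*va*s + (-2)*L0*L2*Rs*psi*ia*s + (2)*L0*L2*psi*psi*w*s*s + (4)*L2*L2*L2*va*ib*s*s*s*s + (-8)*L2*L2*L2*Rs*ia*ib*s*s*s*s + (2)*L2*L2*L2*psi*ib*w*s*s*s*s*s + (8)*L0*L2*L2*L2*ib*ib*w*s*s*s*s + (1)*L2*L2*psi*psi*w*s*s*s*s + (2)*L2*L2*psi*va*s*s*s + (-2)*L2*L2*Rs*psi*ia*s*s*s + (-8)*L0*L2*L2*L2*ia*ia*w*s*s*s*s + (1)*L0*L0*psi*psi*w + (4)*L2*L2*L2*vb*ia*s*s*s*s + (-8)*L2*L2*L2*L2*ia*ia*w*s*s*s*s + (-8)*L2*L2*L2*L2*ib*ib*w*s*s*s*s + (-6)*L2*L2*L2*psi*ib*w*s*s*s + (-1)*L2*L2*psi*psi*w*s*s + (-8)*L2*L2*L2*L2*ia*ia*w*s*s + (-8)*L2*L2*L2*L2*ib*ib*w*s*s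 + (-6)*L2*L2*L2*psi*ib*w*s + (-1)*L2*L2*psi*psi*w) * (c*c+s*s-1)).
  - unfold didN, diqN, N1, N2, N1w, N2w, N1t, N2t, Aa0, Ab0, Bb0, R10, R20, R1w0, R2w0, R1t0, R2t0,
      Aa, Ab, Bb, R1, R2, R1w, R2w, R1t, R2t, LD, idd, iq, KK. ring.
  - rewrite Hcs. ring. }
transitivity ((N1w*N2t - N1t*N2w) / (KK*KK)).
{ unfold N1t, N2t. field. auto. }
rewrite HP. unfold didN, diqN. field. auto.
Qed.

Lemma gen L0 L2 Rs psi va vb ia ib w th : 0 < L0 + L2 -> 0 < L0 - L2 ->
  let Ld := L0 + L2 in let Lq := L0 - L2 in let LD := Ld - Lq in
     let id := isd ia ib th in let iq := isq ia ib th in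
     let did := disd L0 L2 Rs psi va vb ia ib w th in
     let diq := disq L0 L2 Rs psi va vb ia ib w th in
     detO_is L0 L2 Rs psi va vb ia ib w th
       (1 / (Ld * Lq) * ((LD * id + psi) ^ 2 + LD ^ 2 * iq ^ 2) * w
        + LD / (Ld * Lq) * (LD * iq * did - (LD * id + psi) * diq)).
Proof.
intros Hd Hq. intros.
assert (HK : K L0 L2 <> 0).
{ unfold K. assert (0 < (L0+L2)*(L0-L2)) by (apply Rmult_lt_0_compat; auto). nra. }
destruct (d1t L0 L2 Rs psi va vb ia ib w th HK) as (A1 & A2 & A3 & A4).
destruct (dab L0 L2 Rs psi va vb ia ib w th HK) as (B1 & B2 & B3 & B4).
exists (fun i j : nat => match i, j with
  | O, O => 1 | O, _ => 0 | S O, S O => 1 | S O, _ => 0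
  | S (S O), O => Derive (fun z => f1 L0 L2 Rs psi va vb z ib w th) ia
  | S (S O), S O => Derive (fun z => f1 L0 L2 Rs psi va vb ia z w th) ib
  | S (S O), S (S O) => G1w L0 L2 psi ia ib (cos th) (sin th)
  | S (S O), S (S (S O)) => G1t L0 L2 Rs psi va vb ia ib w (cos th) (sin th)
  | S (S (S O)), O => Derive (fun z => f2 L0 L2 Rs psi va vb z ib w th) ia
  | S (S (S O)), S O => Derive (fun z => f2 L0 L2 Rs psi va vb ia z w th) ib
  | S (S (S O)), S (S O) => G2w L0 L2 psi ia ib (cos th) (sin th)
  | S (S (S O)), S (S (S O)) => G2t L0 L2 Rs psi va vb ia ib w (cos th) (sin th)
  | _, _ => 0 end).
simpl. unfold is_grad. repeat split; auto;
  try apply derivable_pt_lim_id; try apply derivable_pt_lim_const.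
unfold det4, det3. simpl.
subst Ld Lq LD id iq did diq. unfold isd, isq, disd, disq.
rewrite (f1_G1 _ _ _ _ _ _ _ _ _ _ HK), (f2_G2 _ _ _ _ _ _ _ _ _ _ HK).
transitivity (G1w L0 L2 psi ia ib (cos th) (sin th) * G2t L0 L2 Rs psi va vb ia ib w (cos th) (sin th)
  - G1t L0 L2 Rs psi va vb ia ib w (cos th) (sin th) * G2w L0 L2 psi ia ib (cos th) (sin th)).
{ ring. }
apply alg.
- pose proof (sin2_cos2 th). unfold Rsqr in H. lra.
- assert (0 < (L0+L2)*(L0-L2)) by (apply Rmult_lt_0_compat; auto). lra.
Qed.

Theorem mainTheorem4 :
  (forall L0 L2 Rs psi va vb ia ib w th : R,
     let Ld := L0 + L2 in let Lq := L0 - L2 in let LD := Ld - Lq in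
     0 < Ld -> 0 < Lq ->
     let id := isd ia ib th in let iq := isq ia ib th in
     let did := disd L0 L2 Rs psi va vb ia ib w th in
     let diq := disq L0 L2 Rs psi va vb ia ib w th in
     detO_is L0 L2 Rs psi va vb ia ib w th
       (1 / (Ld * Lq) * ((LD * id + psi) ^ 2 + LD ^ 2 * iq ^ 2) * w
        + LD / (Ld * Lq) * (LD * iq * did - (LD * id + psi) * diq)))
  /\
  (* surface PMSM: L2 = 0, Ld = Lq = L0 *)
  (forall L0 Rs psi va vb ia ib w th : R,
     0 < L0 ->
     detO_is L0 0 Rs psi va vb ia ib w th (psi ^ 2 / L0 ^ 2 * w))
  /\
  (* synchronous reluctance machine: psi = 0 *)
  (forall L0 L2 Rs va vb ia ib w th : R,
     let Ld := L0 + L2 in let Lq := L0 - L2 in let LD := Ld - Lq in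
     0 < Ld -> 0 < Lq ->
     let id := isd ia ib th in let iq := isq ia ib th in
     let did := disd L0 L2 Rs 0 va vb ia ib w th in
     let diq := disq L0 L2 Rs 0 va vb ia ib w th in
     detO_is L0 L2 Rs 0 va vb ia ib w th
       (LD ^ 2 / (Ld * Lq) * ((id ^ 2 + iq ^ 2) * w + did * iq - id * diq))).
Proof.
split; [|split].
- intros. apply gen; auto.
- intros. assert (H1 : 0 < L0 + 0) by lra. assert (H2 : 0 < L0 - 0) by lra.
  pose proof (gen L0 0 Rs psi va vb ia ib w th H1 H2) as G. simpl in G.
  replace (psi ^ 2 / L0 ^ 2 * w) with
   (1 / ((L0 + 0) * (L0 - 0)) * ((((L0 + 0) - (L0 - 0)) * isd ia ib th + psi) ^ 2 + ((L0 + 0) - (L0 - 0)) ^ 2 * isq ia ib th ^ 2) * w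
    + ((L0 + 0) - (L0 - 0)) / ((L0 + 0) * (L0 - 0)) * (((L0 + 0) - (L0 - 0)) * isq ia ib th * disd L0 0 Rs psi va vb ia ib w th
      - (((L0 + 0) - (L0 - 0)) * isd ia ib th + psi) * disq L0 0 Rs psi va vb ia ib w th)).
  + exact G.
  + field. lra.
- intros. pose proof (gen L0 L2 Rs 0 va vb ia ib w th H H0) as G. simpl in G.
  eapply eq_ind; [exact G|]. subst Ld Lq LD id iq did diq. field. split; lra.
Qed.
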